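(* Assume that for any $i,j\in[1,n]$ the distance $|v_iv_j|$ can be obtained in $O(1)$ time. For $i\in[1,n]$ define $\lambda_i=\min_{j\in[i,n]}\max_{k\in[i,n]} d_{G(i,j)}(v_i,v_k)$ and let $j(i)$ be an index $j\in[i,n]$ attaining this minimum. Then there is an algorithm that computes $\lambda_i$ and $j(i)$ for all $i\in[1,n]$ in total $O(n)$ time.
   Context: Let $v_1,\dots,v_n$ be points of a metric space with metric $|\cdot|$: $|v_iv_j|=|v_jv_i|\ge 0$, $|v_iv_j|=0$ iff $i=j$, and $|v_iv_k|+|v_kv_j|\ge |v_iv_j|$. $P$ is the path graph with vertices $v_1,\dots,v_n$ and edges $e(v_k,v_{k+1})$, $k\in[1,n-1]$, where $e(v_k,v_{k+1})$ has length $|v_kv_{k+1}|$. For $1\le i\le j\le n$, $G(i,j)=P\cup\{e(v_i,v_j)\}$ is obtained from $P$ by adding an edge $e(v_i,v_j)$ of length $|v_iv_j|$ (if $j\le i+1$ then $G(i,j)=P$). For a graph $G$, $d_G(p,q)$ denotes the length of a shortest path between $p$ and $q$ in $G$. *)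

(* Defs.v *)
From Stdlib Require Import Reals List Arith.
Import ListNotations.
Open Scope R_scope.

(** Points v_1..v_n of a metric space are represented by their distance
    function d i j = |v_i v_j| on indices in [1,n]. *)
Definition metric_on (d : nat -> nat -> R) (n : nat) : Prop :=
  forall i j k, (1 <= i <= n)%nat -> (1 <= j <= n)%nat -> (1 <= k <= n)%nat ->
    d i j = d j i /\ 0 <= d i j /\ (d i j = 0 <-> i = j) /\
    d i k + d k j >= d i j.

(** Length of the (unique) path between v_a and v_b in the path graph P. *)
Definition pdist (d : nat -> nat -> R) (a b : nat) : R :=
  fold_right Rplus 0
    (map (fun k => d k (S k)) (seq (Nat.min a b) (Nat.max a b - Nat.min a b))).

(** Shortest-path distance d_{G(i,j)}(v_a, v_b) in G(i,j) = P + e(v_i,v_j):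
    a shortest path either avoids the extra edge (then it is the path in P)
    or uses it exactly once, in one of the two directions. *)
Definition dG (d : nat -> nat -> R) (i j a b : nat) : R :=
  Rmin (pdist d a b)
    (Rmin (pdist d a i + d i j + pdist d j b)
          (pdist d a j + d i j + pdist d i b)).

Definition ecc (d : nat -> nat -> R) (n i j : nat) : R :=
  fold_right Rmax (dG d i j i i) (map (fun k => dG d i j i k) (seq i (S n - i))).

Definition lambda (d : nat -> nat -> R) (n i : nat) : R :=
  fold_right Rmin (ecc d n i i) (map (fun j => ecc d n i j) (seq i (S n - i))).

(** Every instruction costs one step;
    in particular a distance query |v_a v_b| costs O(1). *)
Inductive instr : Type :=
  | NConst (r : nat) (k : nat)
  | NAdd (r a b : nat)
  | NSub (r a b : nat)                  (* nr[r] := nr[a] - nr[b] (truncated) *)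
  | NLoad (r a : nat)
  | NStore (a r : nat)
  | RZero (r : nat)
  | RAdd (r a b : nat)
  | RSub (r a b : nat)
  | RLoad (r a : nat)
  | RStore (a r : nat)
  | Dist (r a b : nat)
  | JLeN (a b l : nat)
  | JLeR (a b l : nat)
  | Jmp (l : nat)
  | Halt.

Record config : Type := Config {
  pc : nat;
  nr : nat -> nat;
  rr : nat -> R;
  nm : nat -> nat;
  rm : nat -> R }.

Definition upd {A : Type} (f : nat -> A) (k : nat) (v : A) : nat -> A :=
  fun x => if Nat.eqb x k then v else f x.

Definition step (P : list instr) (d : nat -> nat -> R) (c : config) : option config :=
  let '(Config p n1 r1 n2 r2) := c in
  match nth_error P p with
  | None => None
  | Some Halt => None
  | Some (NConst r k) => Some (Config (S p) (upd n1 r k) r1 n2 r2)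
  | Some (NAdd r a b) => Some (Config (S p) (upd n1 r (n1 a + n1 b)%nat) r1 n2 r2)
  | Some (NSub r a b) => Some (Config (S p) (upd n1 r (n1 a - n1 b)%nat) r1 n2 r2)
  | Some (NLoad r a) => Some (Config (S p) (upd n1 r (n2 (n1 a))) r1 n2 r2)
  | Some (NStore a r) => Some (Config (S p) n1 r1 (upd n2 (n1 a) (n1 r)) r2)
  | Some (RZero r) => Some (Config (S p) n1 (upd r1 r 0) n2 r2)
  | Some (RAdd r a b) => Some (Config (S p) n1 (upd r1 r (r1 a + r1 b)) n2 r2)
  | Some (RSub r a b) => Some (Config (S p) n1 (upd r1 r (r1 a - r1 b)) n2 r2)
  | Some (RLoad r a) => Some (Config (S p) n1 (upd r1 r (r2 (n1 a))) n2 r2)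
  | Some (RStore a r) => Some (Config (S p) n1 r1 n2 (upd r2 (n1 a) (r1 r)))
  | Some (Dist r a b) => Some (Config (S p) n1 (upd r1 r (d (n1 a) (n1 b))) n2 r2)
  | Some (JLeN a b l) =>
      Some (Config (if Nat.leb (n1 a) (n1 b) then l else S p) n1 r1 n2 r2)
  | Some (JLeR a b l) =>
      Some (Config (if Rle_dec (r1 a) (r1 b) then l else S p) n1 r1 n2 r2)
  | Some (Jmp l) => Some (Config l n1 r1 n2 r2)
  end.

(** [run P d t c = Some c'] iff the machine started in [c] halts within at
    most [t] steps, in the final configuration [c']. *)
Fixpoint run (P : list instr) (d : nat -> nat -> R) (t : nat) (c : config)
  : option config :=
  match step P d c with
  | None => Some c
  | Some c1 => match t with
               | O => None
               | S t' => run P d t' c1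
               end
  end.

Definition init (n : nat) : config :=
  Config 0 (upd (fun _ => 0%nat) 0 n) (fun _ => 0) (fun _ => 0%nat) (fun _ => 0).

(* Main.v *)
Require Import Defs.
From Stdlib Require Import Reals List Arith Lra Lia.
Import ListNotations.
Open Scope R_scope.

Definition Sd (d : nat -> nat -> R) (k : nat) : R := pdist d 1 k.

Lemma sum_app (l1 l2 : list R) :
  fold_right Rplus 0 (l1 ++ l2) = fold_right Rplus 0 l1 + fold_right Rplus 0 l2.
Proof. induction l1; simpl; [lra| rewrite IHl1; lra]. Qed.

Lemma pdist_le d a b : (a <= b)%nat ->
  pdist d a b = fold_right Rplus 0 (map (fun k => d k (S k)) (seq a (b - a))).
Proof. intros H; unfold pdist; rewrite Nat.min_l, Nat.max_r by lia; reflexivity. Qed.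

Lemma pdist_sym d a b : pdist d a b = pdist d b a.
Proof. unfold pdist; rewrite Nat.min_comm, Nat.max_comm; reflexivity. Qed.

Lemma pdist_diff d a b : (1 <= a <= b)%nat -> pdist d a b = Sd d b - Sd d a.
Proof.
  intros H. unfold Sd. rewrite !pdist_le by lia.
  replace (b - 1)%nat with ((a - 1) + (b - a))%nat by lia.
  rewrite seq_app, map_app, sum_app. replace (1 + (a - 1))%nat with a by lia. lra.
Qed.

Lemma Sd_succ d k : (1 <= k)%nat -> Sd d (S k) = Sd d k + d k (S k).
Proof.
  intros H. unfold Sd. rewrite !pdist_le by lia.
  replace (S k - 1)%nat with (S (k - 1)) by lia.
  rewrite seq_S, map_app, sum_app. replace (1 + (k - 1))%nat with k by lia.
  simpl. lra.
Qed.

Lemma Sd_1 d : Sd d 1 = 0.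
Proof. reflexivity. Qed.

Lemma pdist_id d a : pdist d a a = 0.
Proof. unfold pdist; rewrite Nat.min_id, Nat.max_id, Nat.sub_diag; reflexivity. Qed.

Section M.
Context (d : nat -> nat -> R) (n : nat) (Hm : metric_on d n).

Lemma dsym i j : (1 <= i <= n)%nat -> (1 <= j <= n)%nat -> d i j = d j i.
Proof. intros. destruct (Hm i j i) as [? _]; auto. Qed.
Lemma dnn i j : (1 <= i <= n)%nat -> (1 <= j <= n)%nat -> 0 <= d i j.
Proof. intros. destruct (Hm i j i) as [_ [? _]]; auto. Qed.
Lemma d0 i : (1 <= i <= n)%nat -> d i i = 0.
Proof. intros. destruct (Hm i i i) as [_ [_ [[_ ?] _]]]; auto. Qed.
Lemma dtri i j k : (1 <= i <= n)%nat -> (1 <= j <= n)%nat -> (1 <= k <= n)%nat ->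
  d i j <= d i k + d k j.
Proof. intros. destruct (Hm i j k) as [_ [_ [_ ?]]]; auto; lra. Qed.

Lemma Sd_mono a b : (1 <= a <= b)%nat -> (b <= n)%nat -> Sd d a <= Sd d b.
Proof.
  intros H1 H2. replace b with (a + (b - a))%nat by lia.
  assert (H3 : (a + (b - a) <= n)%nat) by lia. revert H3.
  generalize (b - a)%nat as m. induction m; intros Hn.
  - rewrite Nat.add_0_r; lra.
  - replace (a + S m)%nat with (S (a + m)) by lia. rewrite Sd_succ by lia.
    pose proof (dnn (a + m) (S (a + m))). specialize (IHm ltac:(lia)). 
    assert (0 <= d (a+m)%nat (S (a+m))) by (apply dnn; lia). lra.
Qed.

Lemma d_le_S a b : (1 <= a <= b)%nat -> (b <= n)%nat -> d a b <= Sd d b - Sd d a.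
Proof.
  intros H1 H2. replace b with (a + (b - a))%nat by lia.
  assert (H3 : (a + (b - a) <= n)%nat) by lia. revert H3.
  generalize (b - a)%nat as m. induction m; intros Hn.
  - rewrite Nat.add_0_r, d0 by lia; lra.
  - replace (a + S m)%nat with (S (a + m)) by lia. rewrite Sd_succ by lia.
    specialize (IHm ltac:(lia)).
    pose proof (dtri a (S (a + m)) (a + m) ltac:(lia) ltac:(lia) ltac:(lia)). lra.
Qed.

Definition g i j k := Rmin (pdist d i k) (d i j + pdist d j k).

Lemma pdist_nn a b : (1 <= a <= n)%nat -> (1 <= b <= n)%nat -> 0 <= pdist d a b.
Proof.
  intros. destruct (Nat.le_ge_cases a b).
  - rewrite pdist_diff by lia. pose proof (Sd_mono a b ltac:(lia) ltac:(lia)); lra.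
  - rewrite pdist_sym, pdist_diff by lia. pose proof (Sd_mono b a ltac:(lia) ltac:(lia)); lra.
Qed.

Lemma dG_g i j k : (1 <= i <= n)%nat -> (1 <= j <= n)%nat -> (1 <= k <= n)%nat ->
  dG d i j i k = g i j k.
Proof.
  intros. unfold dG, g. rewrite pdist_id.
  pose proof (pdist_nn i j ltac:(lia) ltac:(lia)). pose proof (dnn i j ltac:(lia) ltac:(lia)).
  pose proof (pdist_nn i k ltac:(lia) ltac:(lia)). rewrite Rplus_0_l.
  unfold Rmin; repeat destruct Rle_dec; lra.
Qed.

Lemma g_le i j k : (1 <= i)%nat -> (i <= k <= j)%nat ->
  g i j k = Rmin (Sd d k - Sd d i) (d i j + (Sd d j - Sd d k)).
Proof. intros. unfold g. rewrite (pdist_sym d j k), !pdist_diff by lia. reflexivity. Qed.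

Lemma g_ge i j k : (1 <= i)%nat -> (i <= j <= k)%nat ->
  g i j k = Rmin (Sd d k - Sd d i) (d i j + (Sd d k - Sd d j)).
Proof. intros. unfold g. rewrite !pdist_diff by lia. reflexivity. Qed.



Definition Bmax i j V := (forall k, (i <= k <= j)%nat -> g i j k <= V) /\ exists k, (i <= k <= j)%nat /\ g i j k = V.
Definition Aval i j := d i j + Sd d n - Sd d j.
Definition ncond i j := forall k, (i <= k <= j)%nat -> g i j k < Aval i j.
Definition thr i j := Sd d i + Sd d j + d i j.

Ltac rmin := unfold Rmin in *; repeat destruct Rle_dec; try lra.

Lemma kk_ge_i i j kk : (1 <= kk <= j)%nat -> (1 <= i <= j)%nat -> (j <= n)%nat ->
  (kk = j \/ ~ (Sd d (S kk) + Sd d (S kk) <= thr i j)) -> (i <= kk)%nat.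
Proof.
  intros H1 H2 H3 [H|H]; [lia|]. destruct (le_lt_dec i kk); auto. exfalso; apply H.
  unfold thr. pose proof (Sd_mono (S kk) i ltac:(lia) ltac:(lia)).
  pose proof (Sd_mono i j ltac:(lia) ltac:(lia)). pose proof (dnn i j ltac:(lia) ltac:(lia)). lra.
Qed.

Lemma bmax_eq i j : (1 <= i <= j)%nat -> (j <= n)%nat -> Sd d j + Sd d j <= thr i j ->
  Bmax i j (Sd d j - Sd d i).
Proof.
  intros H1 H2 H3. unfold thr in H3. split.
  - intros k Hk. rewrite g_le by lia. pose proof (Sd_mono k j ltac:(lia) ltac:(lia)).
    pose proof (Rmin_l (Sd d k - Sd d i) (d i j + (Sd d j - Sd d k))). lra.
  - exists j. split; [lia|]. rewrite g_le by lia. rmin.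
Qed.

Lemma bmax_lt i j kk Bv : (1 <= i <= kk)%nat -> (kk < j)%nat -> (j <= n)%nat ->
  Sd d kk + Sd d kk <= thr i j -> ~ (Sd d (S kk) + Sd d (S kk) <= thr i j) ->
  ((d i j + Sd d j - Sd d (S kk) <= Sd d kk - Sd d i /\ Bv = Sd d kk - Sd d i) \/
   (~ (d i j + Sd d j - Sd d (S kk) <= Sd d kk - Sd d i) /\ Bv = d i j + Sd d j - Sd d (S kk))) ->
  Bmax i j Bv.
Proof.
  intros H1 H2 H3 H4 H5 H6. unfold thr in *. split.
  - intros k Hk. rewrite g_le by lia. destruct (le_lt_dec k kk).
    + pose proof (Sd_mono k kk ltac:(lia) ltac:(lia)).
      pose proof (Rmin_l (Sd d k - Sd d i) (d i j + (Sd d j - Sd d k))). lra.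
    + pose proof (Sd_mono (S kk) k ltac:(lia) ltac:(lia)).
      pose proof (Rmin_r (Sd d k - Sd d i) (d i j + (Sd d j - Sd d k))). lra.
  - destruct H6 as [[H6 H7]|[H6 H7]].
    + exists kk. split; [lia|]. rewrite g_le by lia. rmin.
    + exists (S kk). split; [lia|]. rewrite g_le by lia. rmin.
Qed.

Lemma ncond_of i j Bv : (1 <= i <= j)%nat -> (j <= n)%nat -> Bmax i j Bv ->
  ~ (Aval i j <= Bv) -> ncond i j /\ (j < n)%nat.
Proof.
  intros H1 H2 [HB _] HA. split.
  - intros k Hk. specialize (HB k Hk). lra.
  - destruct (Nat.eq_dec j n); [|lia]. subst j. exfalso. apply HA.
    specialize (HB n ltac:(lia)). rewrite g_ge in HB by lia.
    pose proof (d_le_S i n ltac:(lia) ltac:(lia)). unfold Aval. rmin.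
Qed.

Lemma ncond_mono i i' j : ncond i j -> (1 <= i <= i')%nat -> (i' <= j <= n)%nat -> ncond i' j.
Proof.
  intros HN H1 H2 k Hk. specialize (HN k ltac:(lia)).
  rewrite g_le in * by lia. unfold Aval in *.
  pose proof (dtri i j i' ltac:(lia) ltac:(lia) ltac:(lia)).
  pose proof (d_le_S i i' ltac:(lia) ltac:(lia)).
  destruct (Rlt_le_dec (Rmin (Sd d k - Sd d i') (d i' j + (Sd d j - Sd d k)))
     (d i' j + Sd d n - Sd d j)); auto. exfalso. rmin.
Qed.

Lemma thr_j i j : (1 <= i <= j)%nat -> (S j <= n)%nat -> thr i j <= thr i (S j).
Proof.
  intros. unfold thr. rewrite Sd_succ by lia.
  pose proof (dtri i j (S j) ltac:(lia) ltac:(lia) ltac:(lia)).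
  rewrite (dsym (S j) j) in H1 by lia. lra.
Qed.

Lemma thr_i i j : (1 <= i)%nat -> (S i <= j <= n)%nat -> thr i j <= thr (S i) j.
Proof.
  intros. unfold thr. rewrite Sd_succ by lia.
  pose proof (dtri i j (S i) ltac:(lia) ltac:(lia) ltac:(lia)). lra.
Qed.

Lemma thr_bump i kk : (1 <= kk <= i)%nat -> (i <= n)%nat -> Sd d kk + Sd d kk <= thr i i.
Proof.
  intros. unfold thr. rewrite d0 by lia. pose proof (Sd_mono kk i ltac:(lia) ltac:(lia)). lra.
Qed.

Lemma fmax_ge (f : nat -> R) b l x : In x l -> f x <= fold_right Rmax b (map f l).
Proof.
  induction l; simpl; [tauto|]. intros [<-|H].
  - apply Rmax_l.
  - eapply Rle_trans; [apply IHl; auto| apply Rmax_r].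
Qed.
Lemma fmax_le (f : nat -> R) b l V : (forall x, In x l -> f x <= V) -> b <= V ->
  fold_right Rmax b (map f l) <= V.
Proof.
  induction l; simpl; auto. intros H Hb. apply Rmax_lub; auto.
Qed.
Lemma fmin_le (f : nat -> R) b l x : In x l -> fold_right Rmin b (map f l) <= f x.
Proof.
  induction l; simpl; [tauto|]. intros [<-|H].
  - apply Rmin_l.
  - eapply Rle_trans; [apply Rmin_r| apply IHl; auto].
Qed.
Lemma fmin_ge (f : nat -> R) b l V : (forall x, In x l -> V <= f x) -> V <= b ->
  V <= fold_right Rmin b (map f l).
Proof.
  induction l; simpl; auto. intros H Hb. apply Rmin_glb; auto.
Qed.

Lemma ecc_ge i j k : (1 <= i <= k)%nat -> (k <= n)%nat -> (i <= j <= n)%nat ->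
  g i j k <= ecc d n i j.
Proof.
  intros. unfold ecc. rewrite <- dG_g by lia.
  apply (fmax_ge (fun k => dG d i j i k)). apply in_seq. lia.
Qed.

Lemma ecc_le i j V : (1 <= i <= j)%nat -> (j <= n)%nat ->
  (forall k, (i <= k <= n)%nat -> g i j k <= V) -> ecc d n i j <= V.
Proof.
  intros. unfold ecc. apply fmax_le.
  - intros x Hx. apply in_seq in Hx. rewrite dG_g by lia. apply H1; lia.
  - rewrite dG_g by lia. apply H1; lia.
Qed.

Lemma ecc_lowA i j : (1 <= i <= j)%nat -> (j <= n)%nat -> Aval i j <= ecc d n i j.
Proof.
  intros. eapply Rle_trans; [|apply (ecc_ge i j n); lia].
  rewrite g_ge by lia. pose proof (d_le_S i j ltac:(lia) ltac:(lia)). unfold Aval. rmin.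
Qed.

Lemma g_upA i j k : (1 <= i <= j)%nat -> (j <= k <= n)%nat -> g i j k <= Aval i j.
Proof.
  intros. rewrite g_ge by lia. pose proof (Sd_mono k n ltac:(lia) ltac:(lia)). unfold Aval.
  pose proof (Rmin_r (Sd d k - Sd d i) (d i j + (Sd d k - Sd d j))). lra.
Qed.

Lemma ecc_star i j Bv : (1 <= i <= j)%nat -> (j <= n)%nat -> Bmax i j Bv -> Aval i j <= Bv ->
  ecc d n i j = Bv.
Proof.
  intros H1 H2 [HB [k0 [Hk0 Hg]]] HA. apply Rle_antisym.
  - apply ecc_le; auto. intros k Hk. destruct (le_lt_dec k j).
    + apply HB; lia.
    + pose proof (g_upA i j k ltac:(lia) ltac:(lia)). lra.
  - rewrite <- Hg. apply ecc_ge; lia.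
Qed.

Lemma ecc_prev i j : (1 <= i <= j)%nat -> (j <= n)%nat -> ncond i j -> ecc d n i j = Aval i j.
Proof.
  intros H1 H2 HN. apply Rle_antisym.
  - apply ecc_le; auto. intros k Hk. destruct (le_lt_dec k j).
    + apply Rlt_le, HN; lia.
    + apply g_upA; lia.
  - apply ecc_lowA; auto.
Qed.

Lemma A_mono i j j' : (1 <= i <= j)%nat -> (j <= j' <= n)%nat -> Aval i j' <= Aval i j.
Proof.
  intros. unfold Aval. pose proof (dtri i j' j ltac:(lia) ltac:(lia) ltac:(lia)).
  pose proof (d_le_S j j' ltac:(lia) ltac:(lia)). lra.
Qed.

Lemma B_mono i j j' Bv : (1 <= i <= j)%nat -> (j <= j' <= n)%nat -> Bmax i j Bv ->
  Bv <= ecc d n i j'.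
Proof.
  intros H1 H2 [_ [k0 [Hk0 Hg]]]. eapply Rle_trans; [|apply (ecc_ge i j' k0); lia].
  rewrite <- Hg. rewrite !g_le by lia.
  pose proof (dtri i j j' ltac:(lia) ltac:(lia) ltac:(lia)).
  pose proof (d_le_S j j' ltac:(lia) ltac:(lia)). rewrite (dsym j' j) in H by lia. rmin.
Qed.

Lemma lam_lower i js Bv : (1 <= i <= js)%nat -> (js <= n)%nat -> Bmax i js Bv ->
  (forall j, (i <= j < js)%nat -> ncond i j) ->
  forall j, (i <= j <= n)%nat ->
   ((js <= j)%nat -> Bv <= ecc d n i j) /\ ((j < js)%nat -> Aval i (js - 1) <= ecc d n i j).
Proof.
  intros H1 H2 HB HN j Hj. split; intros.
  - eapply B_mono; eauto; lia.
  - eapply Rle_trans; [apply (A_mono i j); lia|]. apply ecc_lowA; lia.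
Qed.

Lemma lam_eq i Bv : (1 <= i <= n)%nat -> Bmax i i Bv -> Aval i i <= Bv ->
  lambda d n i = Bv /\ ecc d n i i = Bv.
Proof.
  intros H1 HB HA. assert (E : ecc d n i i = Bv) by (apply ecc_star; auto; lia).
  split; auto. apply Rle_antisym.
  - rewrite <- E. unfold lambda. apply fmin_le. apply in_seq; lia.
  - unfold lambda. apply fmin_ge; [|rewrite E; apply Rle_refl]. intros x Hx. apply in_seq in Hx.
    apply (B_mono i i x Bv); auto; lia.
Qed.

Lemma lam_gt i js Bv : (1 <= i < js)%nat -> (js <= n)%nat -> Bmax i js Bv -> Aval i js <= Bv ->
  (forall j, (i <= j < js)%nat -> ncond i j) ->
  lambda d n i = Rmin Bv (Aval i (js - 1)) /\ ecc d n i js = Bv /\ ecc d n i (js - 1) = Aval i (js - 1).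
Proof.
  intros H1 H2 HB HA HN.
  assert (E1 : ecc d n i js = Bv) by (apply ecc_star; auto; lia).
  assert (E2 : ecc d n i (js - 1) = Aval i (js - 1)) by (apply ecc_prev; try lia; apply HN; lia).
  split; [|split; auto]. apply Rle_antisym.
  - unfold lambda. apply Rmin_glb.
    + rewrite <- E1. apply fmin_le. apply in_seq; lia.
    + rewrite <- E2. apply fmin_le. apply in_seq; lia.
  - unfold lambda. apply fmin_ge.
    + intros x Hx. apply in_seq in Hx.
      destruct (lam_lower i js Bv ltac:(lia) H2 HB HN x ltac:(lia)) as [L1 L2].
      destruct (le_lt_dec js x).
      * eapply Rle_trans; [apply Rmin_l| auto].
      * eapply Rle_trans; [apply Rmin_r| auto].
    + destruct (lam_lower i js Bv ltac:(lia) H2 HB HN i ltac:(lia)) as [L1 L2].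
      eapply Rle_trans; [apply Rmin_r| apply L2; lia].
Qed.

End M.
Definition prog : list instr := [
 (*0*) NConst 4 1; NConst 6 1; RZero 3;
 (*3*) JLeN 0 6 9; NAdd 5 6 4; Dist 10 6 5; RAdd 3 3 10; NAdd 6 6 4; Jmp 3;
 (*9*) NConst 1 1; NConst 2 1; NConst 3 1; RZero 0; RZero 1; RZero 2;
 (*15*) JLeN 1 0 17; Halt;
 (*17*) JLeN 1 2 22; NAdd 5 2 4; Dist 10 2 5; RAdd 1 1 10; NAdd 2 2 4;
 (*22*) Dist 4 1 2; RAdd 5 0 1; RAdd 5 5 4;
 (*25*) JLeN 2 3 35; NAdd 5 3 4; Dist 10 3 5; RAdd 6 2 10; RAdd 7 6 6; JLeR 7 5 32; Jmp 37;
 (*32*) NAdd 3 3 4; RAdd 2 2 10; Jmp 25;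
 (*35*) RSub 8 1 0; Jmp 43;
 (*37*) RSub 8 2 0; RAdd 7 4 1; RSub 7 7 6; JLeR 7 8 43; RAdd 8 4 1; RSub 8 8 6;
 (*43*) RAdd 9 4 3; RSub 9 9 1; JLeR 9 8 51; NAdd 5 2 4; Dist 10 2 5; RAdd 1 1 10; NAdd 2 2 4; Jmp 22;
 (*51*) JLeN 2 1 62; NSub 5 2 4; Dist 10 1 5; Dist 7 5 2; RSub 12 1 7; RAdd 10 10 3; RSub 10 10 12;
 (*58*) JLeR 8 10 62; RStore 1 10; NStore 1 5; Jmp 64;
 (*62*) RStore 1 8; NStore 1 2;
 (*64*) NAdd 5 1 4; Dist 10 1 5; RAdd 0 0 10; NAdd 1 1 4; Jmp 15 ].

Lemma prog_check : nth_error prog 15 = Some (JLeN 1 0 17) /\ nth_error prog 25 = Some (JLeN 2 3 35)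
  /\ nth_error prog 43 = Some (RAdd 9 4 3) /\ nth_error prog 51 = Some (JLeN 2 1 62)
  /\ nth_error prog 62 = Some (RStore 1 8) /\ nth_error prog 68 = Some (Jmp 15)
  /\ nth_error prog 32 = Some (NAdd 3 3 4) /\ nth_error prog 37 = Some (RSub 8 2 0)
  /\ nth_error prog 64 = Some (NAdd 5 1 4) /\ nth_error prog 9 = Some (NConst 1 1)
  /\ nth_error prog 22 = Some (Dist 4 1 2) /\ nth_error prog 35 = Some (RSub 8 1 0).
Proof. repeat split; reflexivity. Qed.

Fixpoint exec (d : nat -> nat -> R) (m : nat) (c : config) : option config :=
  match m with
  | O => Some c
  | S m' => match step prog d c with None => None | Some c1 => exec d m' c1 end
  end.

Lemma run_exec d m c c' t : exec d m c = Some c' -> run prog d (m + t) c = run prog d t c'.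
Proof.
  revert c; induction m; intros c H; simpl in *. - congruence.
  - destruct (step prog d c) eqn:E; [|discriminate]. apply IHm; auto.
Qed.

Definition reach d c (Q : nat -> config -> Prop) :=
  exists m c', exec d m c = Some c' /\ Q m c'.

Lemma reach_step d c c1 Q : step prog d c = Some c1 -> reach d c1 (fun m c' => Q (S m) c') -> reach d c Q.
Proof. intros H [m [c' [H1 H2]]]. exists (S m), c'. simpl. rewrite H. auto. Qed.

Lemma reach_done d c (Q : nat -> config -> Prop) : Q 0%nat c -> reach d c Q.
Proof. intros; exists 0%nat, c; auto. Qed.

Lemma exec_add d m1 m2 c c1 : exec d m1 c = Some c1 -> exec d (m1 + m2) c = exec d m2 c1.
Proof.
  revert c; induction m1; intros c H; simpl in *. - congruence.
  - destruct (step prog d c); [|discriminate]. auto.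
Qed.

Lemma reach_trans d c Q1 Q : reach d c Q1 ->
  (forall m c', Q1 m c' -> reach d c' (fun m2 c'' => Q (m + m2)%nat c'')) -> reach d c Q.
Proof.
  intros [m [c' [H1 H2]]] H. destruct (H m c' H2) as [m2 [c'' [H3 H4]]].
  exists (m + m2)%nat, c''. rewrite (exec_add _ _ _ _ _ H1). auto.
Qed.

Lemma reach_jlen d p n1 r1 n2 r2 a b l Q : nth_error prog p = Some (JLeN a b l) ->
  ((n1 a <= n1 b)%nat -> reach d (Config l n1 r1 n2 r2) (fun m c' => Q (S m) c')) ->
  ((n1 b < n1 a)%nat -> reach d (Config (S p) n1 r1 n2 r2) (fun m c' => Q (S m) c')) ->
  reach d (Config p n1 r1 n2 r2) Q.
Proof.
  intros E H1 H2. destruct (Nat.leb_spec (n1 a) (n1 b)).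
  - eapply reach_step; [|apply H1; auto]. simpl. rewrite E. rewrite (proj2 (Nat.leb_le _ _) H). reflexivity.
  - eapply reach_step; [|apply H2; auto]. simpl. rewrite E.
    destruct (Nat.leb (n1 a) (n1 b)) eqn:E2; [apply Nat.leb_le in E2; lia| reflexivity].
Qed.

Lemma reach_jler d p n1 r1 n2 r2 a b l Q : nth_error prog p = Some (JLeR a b l) ->
  (r1 a <= r1 b -> reach d (Config l n1 r1 n2 r2) (fun m c' => Q (S m) c')) ->
  (~ r1 a <= r1 b -> reach d (Config (S p) n1 r1 n2 r2) (fun m c' => Q (S m) c')) ->
  reach d (Config p n1 r1 n2 r2) Q.
Proof.
  intros E H1 H2. destruct (Rle_dec (r1 a) (r1 b)) eqn:E2.
  - eapply reach_step; [|apply H1; auto]. simpl. rewrite E, E2. reflexivity.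
  - eapply reach_step; [|apply H2; auto]. simpl. rewrite E, E2. reflexivity.
Qed.

Ltac splitall := repeat match goal with |- _ /\ _ => split end.

Ltac simp := cbv beta; unfold upd in *; cbn [Nat.eqb] in *.

Ltac stp := cbv beta;
  first [ eapply reach_jlen; [reflexivity| intro; simp | intro; simp]
        | eapply reach_jler; [reflexivity| intro; simp | intro; simp]
        | eapply reach_step; [reflexivity| simp] ].

Lemma snloop d n : forall k t n1 r1 n2 r2, k = (Nat.max n 1 - t)%nat -> n1 0%nat = n -> n1 4%nat = 1%nat ->
  n1 6%nat = t -> (1 <= t <= Nat.max n 1)%nat -> r1 3%nat = Sd d t ->
  reach d (Config 3 n1 r1 n2 r2) (fun m c' => pc c' = 9%nat /\ (m <= 6 * k + 1)%nat /\
     nr c' 0 = n /\ nr c' 4 = 1%nat /\ ((1 <= n)%nat -> rr c' 3 = Sd d n)).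
Proof.
  induction k; intros t n1 r1 n2 r2 Hk H0 H4 H6 Ht H3.
  - stp.
    + apply reach_done. simpl. repeat split; try lia; auto. intros. replace n with t by lia. auto.
    + lia.
  - stp.
    + apply reach_done. simpl. lia.
    + do 5 stp. eapply reach_trans. { apply (IHk (S t)); simp; try lia. rewrite H3, H6, H4.
        rewrite Nat.add_1_r, Sd_succ by lia. reflexivity. }
      intros m c' [Hp [Hm [Ha [Hb Hc]]]]. apply reach_done. repeat split; auto; lia.
Qed.

Definition KPost d n i j kk m c' :=
  pc c' = 43%nat /\ nr c' 0 = n /\ nr c' 1 = i /\ nr c' 2 = j /\ nr c' 4 = 1%nat /\
  rr c' 0 = Sd d i /\ rr c' 1 = Sd d j /\ rr c' 3 = Sd d n /\ rr c' 4 = d i j /\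
  exists kk', nr c' 3 = kk' /\ (kk <= kk' <= j)%nat /\ rr c' 2 = Sd d kk' /\
    Sd d kk' + Sd d kk' <= thr d i j /\ Bmax d i j (rr c' 8) /\
    (m <= 10 * (kk' - kk) + 20)%nat.

Lemma kloop d n (Hm : metric_on d n) i j : forall k kk n1 r1 n2 r2, k = (j - kk)%nat ->
  n1 0%nat = n -> n1 1%nat = i -> n1 2%nat = j -> n1 3%nat = kk -> n1 4%nat = 1%nat ->
  r1 0%nat = Sd d i -> r1 1%nat = Sd d j -> r1 2%nat = Sd d kk -> r1 3%nat = Sd d n ->
  r1 4%nat = d i j -> r1 5%nat = thr d i j ->
  (1 <= i <= j)%nat -> (j <= n)%nat -> (1 <= kk <= j)%nat -> Sd d kk + Sd d kk <= thr d i j ->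
  reach d (Config 25 n1 r1 n2 r2) (fun m c' => nm c' = n2 /\ rm c' = r2 /\ KPost d n i j kk m c').
Proof.
  induction k; intros kk n1 r1 n2 r2 Hk H0 H1 H2 H3 H4 R0 R1 R2 R3 R4 R5 Hij Hjn Hkk Hthr.
  - stp; [|lia]. do 2 stp. apply reach_done. unfold KPost; simpl.
    assert (E : kk = j) by lia. rewrite E in *.
    splitall; auto. exists j. splitall; auto; try lia.
    rewrite R1, R0. apply (bmax_eq d n Hm); auto.
  - stp; [lia|]. do 5 stp.
    + rewrite ?H0, ?H1, ?H2, ?H3, ?H4, ?R0, ?R1, ?R2, ?R3, ?R4, ?R5, ?Nat.add_1_r in *.
      do 3 stp. eapply reach_trans. { apply (IHk (S kk)); simp; auto; try lia.
        rewrite R2, Sd_succ by lia; reflexivity. rewrite Sd_succ by lia; lra. }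
      intros m c' [Hn [Hr HK]]. apply reach_done. split; auto. split; auto.
      unfold KPost in *. destruct HK as (Q1&Q2&Q3&Q4&Q5&Q6&Q7&Q8&Q9&kk'&Q10&Q11&Q12&Q13&Q14&Q15).
      splitall; auto. exists kk'. splitall; auto; lia.
    + rewrite ?H0, ?H1, ?H2, ?H3, ?H4, ?R0, ?R1, ?R2, ?R3, ?R4, ?R5, ?Nat.add_1_r in *.
      assert (Hik : (i <= kk)%nat).
      { apply (kk_ge_i d n Hm i j kk); try lia. right. rewrite Sd_succ by lia. auto. }
      do 5 stp.
      * rewrite ?H0, ?H1, ?H2, ?H3, ?H4, ?R0, ?R1, ?R2, ?R3, ?R4, ?R5, ?Nat.add_1_r in *.
        apply reach_done. unfold KPost; simpl. splitall; auto. exists kk.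
        splitall; auto; try lia. 
        apply (bmax_lt d n Hm i j kk); auto; try lia. rewrite Sd_succ by lia; auto.
        left. rewrite Sd_succ by lia. split; [lra|auto].
      * do 2 stp. 
        rewrite ?H0, ?H1, ?H2, ?H3, ?H4, ?R0, ?R1, ?R2, ?R3, ?R4, ?R5, ?Nat.add_1_r in *.
        apply reach_done. unfold KPost; simpl. splitall; auto. exists kk.
        splitall; auto; try lia. 
        apply (bmax_lt d n Hm i j kk); auto; try lia. rewrite Sd_succ by lia; auto.
        rewrite Sd_succ in * by lia. right. split; lra.
Qed.

Definition JPost d n i j kk m c' :=
  pc c' = 51%nat /\ nr c' 0 = n /\ nr c' 1 = i /\ nr c' 4 = 1%nat /\
  rr c' 0 = Sd d i /\ rr c' 3 = Sd d n /\
  exists js kk', nr c' 2 = js /\ nr c' 3 = kk' /\ (j <= js <= n)%nat /\ (kk <= kk' <= js)%nat /\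
    rr c' 1 = Sd d js /\ rr c' 2 = Sd d kk' /\ Sd d kk' + Sd d kk' <= thr d i js /\
    Bmax d i js (rr c' 8) /\ Aval d n i js <= rr c' 8 /\
    (forall j', (i <= j' < js)%nat -> ncond d n i j') /\
    (m <= 40 * (js - j) + 10 * (kk' - kk) + 40)%nat.

Lemma jloop d n (Hm : metric_on d n) i : forall k j kk n1 r1 n2 r2, k = (n - j)%nat ->
  n1 0%nat = n -> n1 1%nat = i -> n1 2%nat = j -> n1 3%nat = kk -> n1 4%nat = 1%nat ->
  r1 0%nat = Sd d i -> r1 1%nat = Sd d j -> r1 2%nat = Sd d kk -> r1 3%nat = Sd d n ->
  (1 <= i <= j)%nat -> (j <= n)%nat -> (1 <= kk <= j)%nat -> Sd d kk + Sd d kk <= thr d i j ->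
  (forall j', (i <= j' < j)%nat -> ncond d n i j') ->
  reach d (Config 22 n1 r1 n2 r2) (fun m c' => nm c' = n2 /\ rm c' = r2 /\ JPost d n i j kk m c').
Proof.
  intros k; induction k as [k IH] using lt_wf_ind.
  intros j kk n1 r1 n2 r2 Hk H0 H1 H2 H3 H4 R0 R1 R2 R3 Hij Hjn Hkk Hthr HN.
  do 3 stp. eapply reach_trans.
  { apply (kloop d n Hm i j (j - kk) kk); simp; auto; try lia.
    all: rewrite ?H1, ?H2, ?R0, ?R1; unfold thr; reflexivity. }
  intros m [p' n1' r1' n2' r2'] [Hn [Hr HK]]. simpl in Hn, Hr. subst n2' r2'.
  destruct HK as (Q1&Q2&Q3&Q4&Q5&Q6&Q7&Q8&Q9&kk'&Q10&Q11&Q12&Q13&Q14&Q15).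
  simpl in *. subst p'.
  do 3 stp.
  - apply reach_done. split; [reflexivity|]. split; [reflexivity|]. unfold JPost; simpl.
    splitall; auto. exists j, kk'. splitall; auto; try lia.
    unfold Aval. rewrite Q7, Q8, Q9 in H. lra.
  - assert (HA : ~ Aval d n i j <= r1' 8%nat).
    { unfold Aval. rewrite Q7, Q8, Q9 in H. lra. }
    destruct (ncond_of d n Hm i j _ ltac:(lia) Hjn Q14 HA) as [HNj Hjn'].
    do 5 stp. eapply reach_trans.
    { apply (IH (n - S j)%nat ltac:(lia) (S j) kk'); simp; auto; try lia.
      all: rewrite ?Q3, ?Q4, ?Q5, ?Q6, ?Q7, ?Q8, ?Q10, ?Q12, ?Nat.add_1_r; auto.
      rewrite Sd_succ by lia; reflexivity.
      pose proof (thr_j d n Hm i j ltac:(lia) ltac:(lia)). lra.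
      intros j' Hj'. destruct (Nat.eq_dec j' j). subst; auto. apply HN; lia. }
    intros m2 c2 [Hn2 [Hr2 HJ]]. apply reach_done. split; auto. split; auto.
    unfold JPost in *. destruct HJ as (P1&P2&P3&P4&P5&P6&js&kk2&P7&P8&P9&P10&P11&P12&P13&P14&P15&P16&P17).
    splitall; auto. exists js, kk2. splitall; auto; lia.
Qed.

Definition BPost d n i j kk n2 r2 m c' :=
  pc c' = 15%nat /\ nr c' 0 = n /\ nr c' 1 = S i /\ nr c' 4 = 1%nat /\
  rr c' 0 = Sd d (S i) /\ rr c' 3 = Sd d n /\
  exists js kk', nr c' 2 = js /\ nr c' 3 = kk' /\ (j <= js <= n)%nat /\ (kk <= kk' <= js)%nat /\
    rr c' 1 = Sd d js /\ rr c' 2 = Sd d kk' /\ Sd d kk' + Sd d kk' <= thr d i js /\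
    (forall j', (i <= j' < js)%nat -> ncond d n i j') /\
    (m <= 40 * (js - j) + 10 * (kk' - kk) + 60)%nat /\
    exists lam J, nm c' = upd n2 i J /\ rm c' = upd r2 i lam /\ lam = lambda d n i /\
      (i <= J <= n)%nat /\ ecc d n i J = lambda d n i.

Lemma body d n (Hm : metric_on d n) i j kk n1 r1 n2 r2 :
  n1 0%nat = n -> n1 1%nat = i -> n1 2%nat = j -> n1 3%nat = kk -> n1 4%nat = 1%nat ->
  r1 0%nat = Sd d i -> r1 1%nat = Sd d j -> r1 2%nat = Sd d kk -> r1 3%nat = Sd d n ->
  (1 <= i <= j)%nat -> (j <= n)%nat -> (1 <= kk <= j)%nat -> Sd d kk + Sd d kk <= thr d i j ->
  (forall j', (i <= j' < j)%nat -> ncond d n i j') ->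
  reach d (Config 22 n1 r1 n2 r2) (BPost d n i j kk n2 r2).
Proof.
  intros H0 H1 H2 H3 H4 R0 R1 R2 R3 Hij Hjn Hkk Hthr HN.
  eapply reach_trans. { apply (jloop d n Hm i (n - j) j kk); auto. }
  intros m [p' n1' r1' n2' r2'] [Hn [Hr HJ]]. simpl in Hn, Hr. subst n2' r2'.
  destruct HJ as (P1&P2&P3&P4&P5&P6&js&kk'&P7&P8&P9&P10&P11&P12&P13&P14&P15&P16&P17).
  simpl in *. subst p'.
  stp.
  -
    assert (E : js = i) by lia. rewrite E in *.
    destruct (lam_eq d n Hm i (r1' 8%nat) ltac:(lia) P14 P15) as [L1 L2].
    do 7 stp. apply reach_done. unfold BPost; simpl.
    rewrite ?P2, ?P3, ?P4, ?P5, ?P6, ?P7, ?P8, ?P11, ?P12, ?Nat.add_1_r.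
    splitall; auto. rewrite Sd_succ by lia; reflexivity.
    exists i, kk'. splitall; auto; try lia.
    exists (r1' 8%nat), i. splitall; auto; try lia; try congruence.
  -
    destruct (lam_gt d n Hm i js (r1' 8%nat) ltac:(lia) ltac:(lia) P14 P15 P16) as [L1 [L2 L3]].
    assert (EA : d i (js - 1)%nat + Sd d n - (Sd d js - d (js - 1)%nat js) = Aval d n i (js - 1)).
    { pose proof (Sd_succ d (js - 1) ltac:(lia)) as HS. replace (S (js - 1)) with js in HS by lia.
      unfold Aval. lra. }
    do 7 stp; rewrite ?P2, ?P3, ?P4, ?P5, ?P6, ?P7, ?P8, ?P11, ?P12, ?Nat.add_1_r in *.
    + do 7 stp. apply reach_done. unfold BPost; simpl.
      rewrite ?P2, ?P3, ?P4, ?P5, ?P6, ?P7, ?P8, ?P11, ?P12, ?Nat.add_1_r.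
      splitall; auto. rewrite Sd_succ by lia; reflexivity.
      exists js, kk'. splitall; auto; try lia.
      exists (r1' 8%nat), js. rewrite L1, Rmin_left by lra. splitall; auto; try lia.
    + do 8 stp. apply reach_done. unfold BPost; simpl.
      rewrite ?P2, ?P3, ?P4, ?P5, ?P6, ?P7, ?P8, ?P11, ?P12, ?Nat.add_1_r.
      splitall; auto. rewrite Sd_succ by lia; reflexivity.
      exists js, kk'. splitall; auto; try lia.
      exists (Aval d n i (js - 1)), (js - 1)%nat. rewrite L1, Rmin_right by lra.
      splitall; auto; try lia.
      unfold upd. rewrite EA. reflexivity.
Qed.

Lemma reach_mono d c (Q1 Q2 : nat -> config -> Prop) : reach d c Q1 ->
  (forall m c', Q1 m c' -> Q2 m c') -> reach d c Q2.
Proof. intros [m [c' [H1 H2]]] H. exists m, c'. auto. Qed.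

Definition MemOK d n (i : nat) (n2 : nat -> nat) (r2 : nat -> R) :=
  forall i', (1 <= i' < i)%nat -> r2 i' = lambda d n i' /\ (i' <= n2 i' <= n)%nat /\
     ecc d n i' (n2 i') = lambda d n i'.

Lemma outer d n (Hm : metric_on d n) : forall k i j kk n1 r1 n2 r2, k = (S n - i)%nat ->
  n1 0%nat = n -> n1 1%nat = i -> n1 2%nat = j -> n1 3%nat = kk -> n1 4%nat = 1%nat ->
  r1 0%nat = Sd d i -> r1 1%nat = Sd d j -> r1 2%nat = Sd d kk -> ((1 <= n)%nat -> r1 3%nat = Sd d n) ->
  (1 <= i <= S n)%nat ->
  ((i <= n)%nat -> (i <= S j)%nat /\ (j <= n)%nat /\ (1 <= kk <= j)%nat /\
     ((i <= j)%nat -> Sd d kk + Sd d kk <= thr d i j) /\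
     (forall j', (i <= j' < j)%nat -> ncond d n i j')) ->
  MemOK d n i n2 r2 ->
  reach d (Config 15 n1 r1 n2 r2) (fun m c' => step prog d c' = None /\
     (m <= 100 * k + 40 * (n - j) + 10 * (n - kk) + 1)%nat /\ MemOK d n (S n) (nm c') (rm c')).
Proof.
  induction k; intros i j kk n1 r1 n2 r2 Hk H0 H1 H2 H3 H4 R0 R1 R2 R3 Hi Hinv Hmem.
  - stp; [lia|]. apply reach_done. simpl. splitall; auto; try lia.
    replace (S n) with i by lia. auto.
  - stp; [|lia]. destruct Hinv as (I1&I2&I3&I4&I5); [lia|].
    assert (R3' : r1 3%nat = Sd d n) by (apply R3; lia).
    assert (CONT : forall j0 kk0 n1' r1', (j <= j0)%nat -> (kk <= kk0)%nat ->
      n1' 0%nat = n -> n1' 1%nat = i -> n1' 2%nat = j0 -> n1' 3%nat = kk0 -> n1' 4%nat = 1%nat ->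
      r1' 0%nat = Sd d i -> r1' 1%nat = Sd d j0 -> r1' 2%nat = Sd d kk0 -> r1' 3%nat = Sd d n ->
      (i <= j0)%nat -> (j0 <= n)%nat -> (1 <= kk0 <= j0)%nat -> Sd d kk0 + Sd d kk0 <= thr d i j0 ->
      (forall j', (i <= j' < j0)%nat -> ncond d n i j') ->
      reach d (Config 22 n1' r1' n2 r2) (fun m c' => step prog d c' = None /\
        (m + 40 * (j0 - j) <= 100 * k + 40 * (n - j) + 10 * (n - kk) + 90)%nat /\
        MemOK d n (S n) (nm c') (rm c'))).
    { intros j0 kk0 n1' r1' Hj0 Hkk0 Q0 Q1 Q2 Q3 Q4 S0 S1 S2 S3 Hij0 Hj0n Hkk0' Hthr0 HN0.
      eapply reach_trans. { apply (body d n Hm i j0 kk0); auto; lia. }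
      intros m [p' n1'' r1'' n2'' r2''] HB. unfold BPost in HB; simpl in HB.
      destruct HB as (B1&B2&B3&B4&B5&B6&js&kk'&B7&B8&B9&B10&B11&B12&B13&B14&B15&lam&J&B16&B17&B18&B19&B20).
      subst p'.
      eapply reach_mono. { apply (IHk (S i) js kk'); auto; try lia.
        - intros Hin. splitall; try lia.
          + intros. pose proof (thr_i d n Hm i js ltac:(lia) ltac:(lia)). lra.
          + intros j' Hj'. apply (ncond_mono d n Hm i (S i) j'); [apply B14|..]; lia.
        - intros i' Hi'. rewrite B16, B17. unfold upd. destruct (Nat.eqb_spec i' i).
          + subst. splitall; auto; lia.
          + apply Hmem; lia. }
      intros m2 c2 [Z1 [Z2 Z3]]. splitall; auto. lia. }
    stp.
    + eapply reach_mono. { apply (CONT j kk); auto; try lia. apply I4; lia. }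
      intros m c' [Z1 [Z2 Z3]]. splitall; auto; lia.
    + do 4 stp. eapply reach_mono.
      { apply (CONT (S j) kk); simp; auto; try lia.
        all: rewrite ?H2, ?H4, ?R1, ?Nat.add_1_r; try reflexivity.
        all: try (rewrite Sd_succ by lia; reflexivity).
        all: try (apply (thr_bump d n Hm); lia).
        rewrite H1, H2 in H5; replace (S j) with i by lia; apply (thr_bump d n Hm); lia. }
      intros m c' [Z1 [Z2 Z3]]. splitall; auto; lia.
Qed.

Lemma run_halt d t c : step prog d c = None -> run prog d t c = Some c.
Proof. intros H. destruct t; cbn [run]; rewrite H; reflexivity. Qed.

Theorem lemma1 :
  exists (P : list instr) (C : nat),
    forall (n : nat) (d : nat -> nat -> R),
      metric_on d n ->
      exists cf : config,
        run P d (C * n + C)%nat (init n) = Some cf /\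
        forall i : nat, (1 <= i <= n)%nat ->
          rm cf i = lambda d n i /\
          (i <= nm cf i <= n)%nat /\
          ecc d n i (nm cf i) = lambda d n i.
Proof.
  exists prog, 200%nat. intros n d Hm.
  assert (HR : reach d (init n) (fun m c' => step prog d c' = None /\ (m <= 160 * n + 20)%nat /\
     MemOK d n (S n) (nm c') (rm c'))).
  { unfold init. do 3 stp. eapply reach_trans.
    { apply (snloop d n (Nat.max n 1 - 1) 1); simp; auto; try lia. }
    intros m [p' n1 r1 n2 r2] (Z1&Z2&Z3&Z4&Z5). simpl in *. subst p'.
    do 6 stp. eapply reach_mono.
    { apply (outer d n Hm n 1 1 1); simp; auto; try lia.
      - intros. splitall; try lia. intros. unfold thr. rewrite d0 with (n := n) by (auto; lia). lra.
      - intros i' Hi'; lia. }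
    intros m2 c2 (Y1&Y2&Y3). splitall; auto. lia. }
  destruct HR as [m [cf [HE [Hs [Hb HM]]]]].
  exists cf. split.
  - replace (200 * n + 200)%nat with (m + (200 * n + 200 - m))%nat by lia.
    rewrite (run_exec _ _ _ _ _ HE). apply run_halt; auto.
  - intros i Hi. apply HM. lia.
Qed.
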